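(* Let $A\subseteq\mathbf R^{n+1}$ be closed, $x,y\in\partial A$, and $0<r<s/2$. Suppose $u,v\in\mathbf S^n$ satisfy $$B(x-ru,r)\subseteq A,\quad U(x+su,s)\cap A=\varnothing,\quad B(y-rv,r)\subseteq A,\quad U(y+sv,s)\cap A=\varnothing.$$ Then $$|u-v|\le\max\Big\{\frac{2(s-2r)}{r(s-r)},\sqrt{\frac{2}{r(s-r)}}\Big\}\,|x-y|.$$
   Context: $\mathbf R^{n+1}$ carries the Euclidean norm $|\cdot|$; $\mathbf S^n$ is the Euclidean unit sphere; $B(z,t)$ and $U(z,t)$ denote the closed and open Euclidean balls of center $z$ and radius $t$. *)

(* Defs.v *)
(* R^{n+1} is modelled as row vectors 'rV[R]_(n.+1). *)
From HB Require Import structures.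
From mathcomp Require Import all_boot all_order all_algebra.
From mathcomp Require Import all_classical all_reals all_analysis.
Set Implicit Arguments. Unset Strict Implicit. Unset Printing Implicit Defensive.
Import Order.TTheory GRing.Theory Num.Theory.
Import numFieldTopology.Exports numFieldNormedType.Exports.
Local Open Scope ring_scope.
Local Open Scope classical_set_scope.

Section Euclid.
Variables (R : realType) (k : nat).
Definition edot (a b : 'rV[R]_k) : R := \sum_(i < k) a 0 i * b 0 i.
Definition enorm (a : 'rV[R]_k) : R := Num.sqrt (edot a a).
Definition cball (z : 'rV[R]_k) (t : R) : set 'rV[R]_k := [set w | enorm (w - z) <= t].
Definition oball (z : 'rV[R]_k) (t : R) : set 'rV[R]_k := [set w | enorm (w - z) < t].
Definition usphere : set 'rV[R]_k := [set w | enorm w = 1].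
(* topological boundary (the library topology on 'rV is the product topology,
   which coincides with the Euclidean one) *)
Definition bdry (A : set 'rV[R]_k) : set 'rV[R]_k := closure A `\` interior A.
End Euclid.

(* Main.v *)
Require Import Defs.
From HB Require Import structures.
From mathcomp Require Import all_boot all_order all_algebra.
From mathcomp Require Import all_classical all_reals all_analysis.
From mathcomp Require Import ring lra.
Import Order.TTheory GRing.Theory Num.Theory.
Import numFieldTopology.Exports numFieldNormedType.Exports.
Local Open Scope ring_scope.
Local Open Scope classical_set_scope.

Section Aux.
Variables (R : realType) (k : nat).
Implicit Types (a b c : 'rV[R]_k) (t : R).

Lemma edotDl a b c : edot (a + b) c = edot a c + edot b c.
Proof. rewrite /edot -big_split; apply: eq_bigr => i _; rewrite mxE mulrDl. by []. Qed.
Lemma edotC a b : edot a b = edot b a.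
Proof. rewrite /edot; apply: eq_bigr => i _; by rewrite mulrC. Qed.
Lemma edotDr a b c : edot c (a + b) = edot c a + edot c b.
Proof. by rewrite edotC edotDl !(edotC c). Qed.
Lemma edotZl t a b : edot (t *: a) b = t * edot a b.
Proof. rewrite /edot mulr_sumr; apply: eq_bigr => i _; by rewrite mxE mulrA. Qed.
Lemma edotZr t a b : edot b (t *: a) = t * edot b a.
Proof. by rewrite edotC edotZl edotC. Qed.
Lemma edotNl a b : edot (- a) b = - edot a b.
Proof. by rewrite -scaleN1r edotZl mulN1r. Qed.
Lemma edotNr a b : edot b (- a) = - edot b a.
Proof. by rewrite edotC edotNl edotC. Qed.
Lemma edot_ge0 a : 0 <= edot a a.
Proof. rewrite /edot; apply: sumr_ge0 => i _; rewrite -expr2; exact: sqr_ge0. Qed.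
Lemma enorm_ge0 a : 0 <= enorm a.
Proof. exact: sqrtr_ge0. Qed.
Lemma enorm_sq a : enorm a ^+ 2 = edot a a.
Proof. by rewrite sqr_sqrtr // edot_ge0. Qed.
Lemma enormZ t a : 0 <= t -> enorm (t *: a) = t * enorm a.
Proof.
move=> ht; rewrite /enorm edotZl edotZr mulrA -expr2 sqrtrM ?sqr_ge0 //.
by rewrite sqrtr_sqr ger0_norm.
Qed.
Lemma enormN a : enorm (- a) = enorm a.
Proof. by rewrite /enorm edotNl edotNr opprK. Qed.

Lemma ball_sep (A : set 'rV[R]_k) a b r s : 0 < r -> 0 < s ->
  cball a r `<=` A -> oball b s `&` A = set0 -> r + s <= enorm (a - b).
Proof.
move=> hr hs hin hout; rewrite leNgt; apply/negP => hlt.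
pose t := r / (r + s).
have ht0 : 0 <= t by rewrite /t divr_ge0 // ltW // addr_gt0.
have ht1 : 0 <= 1 - t.
  by rewrite subr_ge0 /t ler_pdivrMr ?addr_gt0 // mul1r lerDl ltW.
pose w := a + t *: (b - a).
have e1 : w - a = t *: (b - a).
  by apply/rowP => i; rewrite !mxE; ring.
have e2 : w - b = (1 - t) *: (a - b).
  by apply/rowP => i; rewrite !mxE; ring.
have hnab : enorm (b - a) = enorm (a - b) by rewrite -opprB enormN.
have hrs : 0 < r + s by rewrite addr_gt0.
have hwA : A w.
  apply: hin; rewrite /cball /= e1 enormZ // hnab.
  rewrite /t mulrAC ler_pdivrMr //; rewrite ler_pM2l //; exact: ltW.
have hwB : oball b s w.
  rewrite /oball /= e2 enormZ // /t.
  have -> : 1 - r / (r + s) = s / (r + s).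
    by field; rewrite gt_eqF.
  by rewrite mulrAC ltr_pdivrMr // ltr_pM2l.
have : (oball b s `&` A) w by split.
by rewrite hout.
Qed.

End Aux.

Theorem lemma2p12 (R : realType) (n : nat) (A : set 'rV[R]_n.+1)
    (x y u v : 'rV[R]_n.+1) (r s : R) :
  closed A -> bdry A x -> bdry A y ->
  0 < r -> r < s / 2 ->
  usphere u -> usphere v ->
  cball (x - r *: u) r `<=` A -> oball (x + s *: u) s `&` A = set0 ->
  cball (y - r *: v) r `<=` A -> oball (y + s *: v) s `&` A = set0 ->
  enorm (u - v) <=
    Num.max (2 * (s - 2 * r) / (r * (s - r))) (Num.sqrt (2 / (r * (s - r))))
      * enorm (x - y).
Proof.
move=> _ _ _ hr hrs hu hv hinx houtx hiny houty.
have hs2 : 2 * r < s by move: hrs; rewrite ltr_pdivlMr // mulrC.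
have hs : 0 < s by lra.
have H1 := @ball_sep _ _ A _ _ r s hr hs hiny houtx.
have H2 := @ball_sep _ _ A _ _ r s hr hs hinx houty.
have H3 := @edot_ge0 _ _ (x - y - r *: (u - v)).
have uu : edot u u = 1 by rewrite -enorm_sq hu expr1n.
have vv : edot v v = 1 by rewrite -enorm_sq hv expr1n.
have sq : forall z : 'rV[R]_n.+1, r + s <= enorm z -> (r + s) ^+ 2 <= edot z z.
  move=> z hz; rewrite -enorm_sq; have := @enorm_ge0 _ _ z; nra.
move/sq: H1 => H1; move/sq: H2 => H2.
have Hd := @enorm_sq _ _ (x - y); have He := @enorm_sq _ _ (u - v).
have Dge := @enorm_ge0 _ _ (x - y); have Ege := @enorm_ge0 _ _ (u - v).
move: H1 H2 H3 Hd He.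
rewrite !(edotDl, edotDr, edotNl, edotNr, edotZl, edotZr).
rewrite ?[edot y x]edotC ?[edot u x]edotC ?[edot v x]edotC ?[edot u y]edotC
        ?[edot v y]edotC ?[edot v u]edotC uu vv.
set D := enorm (x - y); set E := enorm (u - v).
move=> H1 H2 H3 Hd He.
have S : r * s * E ^+ 2 <= D ^+ 2 + (s - r) * (edot x u - edot x v - edot y u + edot y v).
  rewrite Hd He; lra.
have H3' : 0 <= D ^+ 2 - 2 * r * (edot x u - edot x v - edot y u + edot y v) + r ^+ 2 * E ^+ 2.
  rewrite Hd He; lra.
have Hk : 0 <= (s + r) * (D ^+ 2 - r ^+ 2 * E ^+ 2).
  have a1 : 0 <= 2 * r * (D ^+ 2 + (s - r) * (edot x u - edot x v - edot y u + edot y v) - r * s * E ^+ 2).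
    apply: mulr_ge0; [lra | lra].
  have a2 : 0 <= (s - r) * (D ^+ 2 - 2 * r * (edot x u - edot x v - edot y u + edot y v) + r ^+ 2 * E ^+ 2).
    apply: mulr_ge0; [lra | lra].
  have -> : (s + r) * (D ^+ 2 - r ^+ 2 * E ^+ 2) =
    2 * r * (D ^+ 2 + (s - r) * (edot x u - edot x v - edot y u + edot y v) - r * s * E ^+ 2)
    + (s - r) * (D ^+ 2 - 2 * r * (edot x u - edot x v - edot y u + edot y v) + r ^+ 2 * E ^+ 2).
    ring.
  lra.
have Hk2 : r ^+ 2 * E ^+ 2 <= D ^+ 2.
  have : 0 <= D ^+ 2 - r ^+ 2 * E ^+ 2.
    by rewrite -(pmulr_rge0 _ (_ : 0 < s + r)) // addr_gt0.
  lra.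
have rED : r * E <= D.
  rewrite -(@ler_pXn2r _ 2) ?nnegrE ?mulr_ge0 ?(ltW hr) // exprMn; lra.
have hE : E <= r^-1 * D by rewrite mulrC ler_pdivlMr // mulrC.
set M := Num.max _ _.
have hM : r^-1 <= M.
  have hsr : 0 < r * (s - r) by apply: mulr_gt0; lra.
  case: (lerP (3 * r) s) => h3.
    rewrite /M le_max; apply/orP; left.
    rewrite -subr_ge0.
    have -> : 2 * (s - 2 * r) / (r * (s - r)) - r^-1 = (s - 3 * r) / (r * (s - r)).
      by field; apply/andP; split; apply/negP => /eqP; lra.
    apply: divr_ge0; lra.
  rewrite /M le_max; apply/orP; right.
  have -> : r^-1 = Num.sqrt (r^-1 ^+ 2) by rewrite sqrtr_sqr ger0_norm // invr_ge0 ltW.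
  rewrite ler_sqrt; last by apply: divr_ge0; lra.
  rewrite -subr_ge0.
  have -> : 2 / (r * (s - r)) - r^-1 ^+ 2 = (3 * r - s) / (r * (r * (s - r))).
    by field; apply/andP; split; apply/negP => /eqP; lra.
  apply: divr_ge0; first lra.
  by apply: mulr_ge0; [lra | apply: ltW].
apply: le_trans hE _; apply: ler_wpM2r => //.
Qed.
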